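(* Under the hypotheses of the following setting: $K=\begin{bmatrix} A & B^T\\ B & -C\end{bmatrix}$ with $A\in\mathbb{R}^{m\times m}$ symmetric positive definite, $B\in\mathbb{R}^{n\times m}$ of rank $n$, $C\in\mathbb{R}^{n\times n}$ symmetric positive semidefinite, $K=LJ_{m+n}L^T$ a generalized Cholesky factorization, and $\Delta K$ symmetric with $\|L^{-1}\|_2^2\|\Delta K\|_F<\tfrac12$, there is a generalized Cholesky factorization $K+\Delta K=(L+\Delta L)J_{m+n}(L+\Delta L)^T$ such that $$\|L^{-1}\Delta L\|_F\le \frac{1}{\sqrt2}\left(1-\sqrt{1-2\|L^{-1}\|_2^2\|\Delta K\|_F}\right).$$
   Context: $J_{m+n}=\begin{bmatrix} I_m&0\\0&-I_n\end{bmatrix}$. A generalized Cholesky factorization of $M\in\mathbb{R}^{(m+n)\times(m+n)}$ is $M=LJ_{m+n}L^T$ with $L=\begin{bmatrix}L_{11}&0\\L_{21}&L_{22}\end{bmatrix}$, $L_{11}\in\mathbb{R}^{m\times m}$, $L_{22}\in\mathbb{R}^{n\times n}$ nonsingular lower triangular, $L_{21}\in\mathbb{R}^{n\times m}$. $\|\cdot\|_2$ is the spectral norm and $\|\cdot\|_F$ the Frobenius norm. *)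

(* Defs.v *)
From HB Require Import structures.
From mathcomp Require Import all_boot all_order all_algebra.
Set Implicit Arguments. Unset Strict Implicit. Unset Printing Implicit Defensive.
Import Order.TTheory GRing.Theory Num.Theory.
Local Open Scope ring_scope.

Section Defs.
Variable R : rcfType.

Definition vnorm2 k (x : 'cV[R]_k) : R := \sum_(i < k) x i 0 ^+ 2.

Definition frob p q (M : 'M[R]_(p, q)) : R :=
  Num.sqrt (\sum_(i < p) \sum_(j < q) M i j ^+ 2).

(* s is the spectral norm of M: s = max_{x <> 0} ||Mx||_2/||x||_2
   (the maximum is attained; for q = 0 the norm is 0). *)
Definition is_spectral_norm p q (M : 'M[R]_(p, q)) (s : R) : Prop :=
  0 <= s /\
  (forall x : 'cV[R]_q, vnorm2 (M *m x) <= s ^+ 2 * vnorm2 x) /\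
  (s = 0 \/ exists x : 'cV[R]_q, x != 0 /\ vnorm2 (M *m x) = s ^+ 2 * vnorm2 x).

Definition sym_mx k (M : 'M[R]_k) : Prop := M^T = M.

Definition posdef k (M : 'M[R]_k) : Prop :=
  sym_mx M /\ forall x : 'cV[R]_k, x != 0 -> 0 < (x^T *m M *m x) 0 0.

Definition psd k (M : 'M[R]_k) : Prop :=
  sym_mx M /\ forall x : 'cV[R]_k, 0 <= (x^T *m M *m x) 0 0.

Definition lower_tri k (M : 'M[R]_k) : Prop :=
  forall i j : 'I_k, (i < j)%N -> M i j = 0.

Definition Jmx m n : 'M[R]_(m + n) := block_mx 1%:M 0 0 (- 1%:M).

Definition gen_chol m n (M L : 'M[R]_(m + n)) : Prop :=
  exists (L11 : 'M[R]_m) (L21 : 'M[R]_(n, m)) (L22 : 'M[R]_n),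
    L = block_mx L11 0 L21 L22 /\
    lower_tri L11 /\ lower_tri L22 /\
    L11 \in unitmx /\ L22 \in unitmx /\
    M = L *m Jmx m n *m L^T.

End Defs.

(* Main.v *)
Require Import Defs.
From HB Require Import structures.
From mathcomp Require Import all_boot all_order all_algebra.
From mathcomp Require Import ring lra.
Set Implicit Arguments. Unset Strict Implicit. Unset Printing Implicit Defensive.
Import Order.TTheory GRing.Theory Num.Theory.
Local Open Scope ring_scope.

Section Real.
Variable R : rcfType.
Implicit Types u p q w x : R.

Lemma uni u : 0 <= u -> u <= 1 ->
  u*(2-u^+2)*((4-(1+3*u)^+2)*(1+3*u)^+2 + 16*u^+2*(2-u^+2))
  <= (1-u)^+2*(u+2)*(1+3*u)^+4.
Proof.
move=> u0 u1; rewrite -subr_ge0.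
have -> : (1-u)^+2*(u+2)*(1+3*u)^+4 - u*(2-u^+2)*((4-(1+3*u)^+2)*(1+3*u)^+2 + 16*u^+2*(2-u^+2))
  = 2 + 15*u + 48*u^+2 + 30*u^+3 + 78*u^+4 + u^+5*(19 - 16*u^+2) by ring.
have h2 : u^+2 <= 1 by rewrite expr_le1.
have h3 : 0 <= u^+3 by rewrite exprn_ge0.
have h4 : 0 <= u^+4 by rewrite exprn_ge0.
have h5 : 0 <= u^+5 by rewrite exprn_ge0.
have h6 : 0 <= u^+2 by rewrite exprn_ge0.
have : 0 <= u^+5*(19 - 16*u^+2) by apply: mulr_ge0 => //; lra.
lra.
Qed.

Lemma keyw u p q w : 0 <= u -> u <= 1 -> 0 <= p -> 0 <= q -> 0 <= w ->
  8* p^+2 + 4*q^+2 <= u^+2*(2-u^+2) -> w*(1+3*u) <= 4 * p ->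
  w^+2 + (q + w^+2)^+2 <= u - u^+2/2.
Proof.
move=> u0 u1 p0 q0 w0 hpq hw.
set E := 1 + 3*u.
have E0 : 0 < E by rewrite /E; lra.
have hw2 : w^+2 * E^+2 <= 16 * p^+2.
  have : 0 <= w * E by apply: mulr_ge0 => //; lra.
  rewrite -/E in hw. nra.
have hqw : (q + w^+2)^+2 <= 2*q^+2 + 2*(w^+2)^+2.
  rewrite -subr_ge0. have -> : 2*q^+2 + 2*(w^+2)^+2 - (q + w^+2)^+2 = (q - w^+2)^+2 by ring.
  exact: sqr_ge0.
suff : w^+2 * (1 - E^+2/4 + 2*w^+2) <= u*(1-u)^+2*(u+2)/2 by nra.
set Wm := 2*u^+2*(2-u^+2)/E^+2.
have E2 : 0 < E^+2 by rewrite exprn_gt0.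
have hWm : w^+2 <= Wm.
  rewrite /Wm ler_pdivlMr //. nra.
set a := 1 - E^+2/4.
have hW0 : 0 <= w^+2 by rewrite exprn_ge0.
have hWm0 : 0 <= Wm by lra.
have hr : 0 <= u*(1-u)^+2*(u+2)/2.
  apply: divr_ge0 => //; apply: mulr_ge0; [apply: mulr_ge0 => //; exact: sqr_ge0| lra].
have step1 : w^+2 * (a + 2*w^+2) <= w^+2 * (a + 2*Wm) by nra.
case: (lerP (a + 2*Wm) 0) => ha.
  have : w^+2 * (a + 2*Wm) <= 0 by nra.
  lra.
have step2 : w^+2 * (a + 2*Wm) <= Wm * (a + 2*Wm) by nra.
suff : Wm * (a + 2*Wm) <= u*(1-u)^+2*(u+2)/2 by lra.
have eq : Wm * (a + 2*Wm) = u^+2*(2-u^+2)*((4-E^+2)*E^+2 + 16*u^+2*(2-u^+2)) / (2 * E^+4).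
  rewrite /Wm /a; field. by rewrite gt_eqF.
rewrite eq ler_pdivrMr; last by rewrite mulr_gt0 // exprn_gt0.
have := uni u0 u1; rewrite -/E => hu.
have : u * (u*(2-u^+2)*((4-E^+2)*E^+2 + 16*u^+2*(2-u^+2))) <= u * ((1-u)^+2*(u+2)*E^+4).
  by apply: ler_wpM2l.
have -> : u ^+ 2 * (2 - u ^+ 2) * ((4 - E ^+ 2) * E ^+ 2 + 16 * u ^+ 2 * (2 - u ^+ 2)) =
   u * (u*(2-u^+2)*((4-E^+2)*E^+2 + 16*u^+2*(2-u^+2))) by ring.
move=> h. lra.
Qed.

Lemma sq_le (a b : R) : 0 <= a -> 0 <= b -> a^+2 <= b^+2 -> a <= b.
Proof. by move=> a0 b0; rewrite ler_sqr ?nnegrE. Qed.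

Definition s2 : R := Num.sqrt 2.
Lemma s2_ge0 : 0 <= s2. Proof. exact: sqrtr_ge0. Qed.
Lemma s2_sq : s2 ^+ 2 = 2. Proof. by rewrite /s2 sqr_sqrtr. Qed.
Lemma s2_ge43 : 4/3 <= s2.
Proof. have := s2_ge0; have := s2_sq; move=> h1 h0. nra. Qed.

Lemma fin x e : 0 <= x -> 0 <= e -> e <= 1/2 -> 2 * x^+2 <= 1 ->
  s2 * x <= e + x^+2 -> s2 * x <= 1 - Num.sqrt (1 - 2*e).
Proof.
move=> x0 e0 e1 hx h.
have u0 := sqrtr_ge0 (1 - 2*e).
have uu : Num.sqrt (1 - 2*e) ^+2 = 1 - 2*e by rewrite sqr_sqrtr //; lra.
set u := Num.sqrt (1 - 2*e) in u0 uu *.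
have := s2_ge0; have := s2_sq => hs hs0.
set y := s2 * x in h *.
have y0 : 0 <= y by rewrite /y mulr_ge0.
have y2 : y^+2 = 2 * x^+2 by rewrite /y exprMn hs.
have y1 : y <= 1.
  have yy : y^+2 <= 1 by lra.
  apply: sq_le => //; lra.
have : (1 - y)^+2 >= u^+2.
  have -> : (1-y)^+2 = 1 - 2*y + y^+2 by ring.
  lra.
move=> h2. suff: u <= 1 - y by lra.
apply: sq_le => //; lra.
Qed.

Lemma stepreal x e e' p q w : 0 <= x -> 0 <= e -> 0 <= e' -> e' < 1/2 ->
  s2 * x <= 1 - Num.sqrt (1 - 2*e) -> e^+2 + 2* p^+2 + q^+2 <= e'^+2 ->
  0 <= p -> 0 <= q -> 0 <= w -> w <= p + x * w ->
  q + w^+2 < 1 /\ (forall dl : R, dl^+2 <= (q + w^+2)^+2 -> x^+2 + w^+2 + dl^+2 <= 1/2).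
Proof.
move=> x0 e0 e'0 e'1 hx he p0 q0 w0 hw.
have ee' : e <= e'.
  have : e^+2 <= e'^+2 by have := sqr_ge0 p; have := sqr_ge0 q; lra.
  nra.
have u0 := sqrtr_ge0 (1 - 2*e).
have uu : Num.sqrt (1 - 2*e) ^+2 = 1 - 2*e by rewrite sqr_sqrtr //; lra.
set u := Num.sqrt (1 - 2*e) in u0 uu hx.
have u1 : u <= 1 by nra.
have hs := s2_ge43; have hs2 := s2_sq.
have hx3 : x <= 3 * (1 - u) / 4 by nra.
have hw' : w * (1 + 3*u) <= 4 * p by nra.
have hpq : 8* p^+2 + 4*q^+2 <= u^+2*(2-u^+2).
  have : 4 * e'^+2 < 1 by nra.
  have -> : u^+2*(2-u^+2) = 1 - 4*e^+2 by rewrite uu; ring.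
  lra.
have K := keyw u0 u1 p0 q0 w0 hpq hw'.
have hx2 : 2 * x^+2 <= (1-u)^+2.
  have : 0 <= s2 * x by rewrite mulr_ge0 // s2_ge0.
  have : (s2 * x)^+2 = 2 * x^+2 by rewrite exprMn hs2.
  nra.
have ht : (q + w^+2)^+2 <= 1/2 by nra.
split.
  have t0 : 0 <= q + w^+2 by have := sqr_ge0 w; lra.
  have : q + w^+2 <= 3/4 by apply: sq_le => //; lra.
  lra.
move=> dl hdl. nra.
Qed.
End Real.


Section Norms.
Variable R : rcfType.

Lemma sq_le' (a b : R) : 0 <= a -> 0 <= b -> a^+2 <= b^+2 -> a <= b.
Proof. by move=> a0 b0; rewrite ler_sqr ?nnegrE. Qed.

Lemma sum3 (I : finType) (f g h : I -> R) :
  \sum_i (f i + g i - h i) = \sum_i f i + \sum_i g i - \sum_i h i.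
Proof. by rewrite sumrB big_split. Qed.

Lemma CS (I : finType) (a b : I -> R) :
  (\sum_i a i * b i)^+2 <= (\sum_i a i ^+2) * (\sum_i b i ^+2).
Proof.
set A := \sum_i a i ^+2; set B := \sum_i b i ^+2; set C := \sum_i a i * b i.
have H : \sum_i \sum_j (a i * b j - a j * b i)^+2 = 2 * (A * B - C^+2).
  transitivity (\sum_i (a i ^+2 * B + b i ^+2 * A - 2 * (a i * b i) * C)).
    apply: eq_bigr => i _.
    rewrite /A /B /C !mulr_sumr -sum3; apply: eq_bigr => j _; ring.
  rewrite sum3 -!mulr_suml -mulr_sumr -/A -/B -/C; ring.
have : 0 <= \sum_i \sum_j (a i * b j - a j * b i)^+2.
  by apply: sumr_ge0 => i _; apply: sumr_ge0 => j _; exact: sqr_ge0.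
rewrite H; lra.
Qed.

Lemma sum_sq_ge0 (I : finType) (a : I -> R) : 0 <= \sum_i a i ^+2.
Proof. by apply: sumr_ge0 => i _; exact: sqr_ge0. Qed.

Lemma Mink (I : finType) (a b : I -> R) :
  Num.sqrt (\sum_i (a i + b i)^+2) <= Num.sqrt (\sum_i a i ^+2) + Num.sqrt (\sum_i b i ^+2).
Proof.
have hA := sum_sq_ge0 a; have hB := sum_sq_ge0 b; have hAB := sum_sq_ge0 (fun i => a i + b i).
apply: sq_le'; first exact: sqrtr_ge0.
  by apply: addr_ge0; exact: sqrtr_ge0.
rewrite sqr_sqrtr //.
have -> : \sum_i (a i + b i)^+2 = \sum_i a i ^+2 + \sum_i b i ^+2 + 2 * \sum_i a i * b i.
  rewrite mulr_sumr -!big_split /=; apply: eq_bigr => i _; ring.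
have hC : \sum_i a i * b i <= Num.sqrt (\sum_i a i ^+2) * Num.sqrt (\sum_i b i ^+2).
  rewrite -sqrtrM //. apply: le_trans (ler_norm _) _.
  rewrite -sqrtr_sqr ler_sqrt; first exact: CS.
  by apply: mulr_ge0.
have e : (Num.sqrt (\sum_i a i ^+2) + Num.sqrt (\sum_i b i ^+2))^+2 =
   Num.sqrt (\sum_i a i ^+2) ^+2 + Num.sqrt (\sum_i b i ^+2) ^+2 +
   2 * (Num.sqrt (\sum_i a i ^+2) * Num.sqrt (\sum_i b i ^+2)) by ring.
rewrite e !sqr_sqrtr //. lra.
Qed.

Definition fr2 p q (M : 'M[R]_(p, q)) : R := \sum_i \sum_j M i j ^+ 2.

Lemma fr2_ge0 p q (M : 'M[R]_(p, q)) : 0 <= fr2 M.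
Proof. by apply: sumr_ge0 => i _; apply: sum_sq_ge0. Qed.

Lemma frobE p q (M : 'M[R]_(p, q)) : frob M = Num.sqrt (fr2 M).
Proof. by []. Qed.

Lemma frob_ge0 p q (M : 'M[R]_(p, q)) : 0 <= frob M.
Proof. exact: sqrtr_ge0. Qed.

Lemma frob_sq p q (M : 'M[R]_(p, q)) : frob M ^+ 2 = fr2 M.
Proof. by rewrite frobE sqr_sqrtr // fr2_ge0. Qed.

Lemma fr2_pair p q (M : 'M[R]_(p, q)) :
  fr2 M = \sum_(ij : 'I_p * 'I_q) M ij.1 ij.2 ^+ 2.
Proof. by rewrite /fr2 pair_bigA. Qed.

Lemma frob_add p q (A B : 'M[R]_(p, q)) : frob (A + B) <= frob A + frob B.
Proof.
rewrite !frobE !fr2_pair.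
rewrite (eq_bigr (fun ij => (A ij.1 ij.2 + B ij.1 ij.2)^+2)); last by move=> ij _; rewrite mxE.
exact: (Mink (fun ij : 'I_p * 'I_q => A ij.1 ij.2) (fun ij => B ij.1 ij.2)).
Qed.

Lemma fr2_opp p q (A : 'M[R]_(p, q)) : fr2 (- A) = fr2 A.
Proof. by apply: eq_bigr => i _; apply: eq_bigr => j _; rewrite mxE sqrrN. Qed.

Lemma frob_sub p q (A B : 'M[R]_(p, q)) : frob (A - B) <= frob A + frob B.
Proof. by have := frob_add A (- B); rewrite [frob (- B)]frobE fr2_opp. Qed.

Lemma fr2_tr p q (A : 'M[R]_(p, q)) : fr2 A^T = fr2 A.
Proof.
rewrite /fr2 exchange_big; apply: eq_bigr => i _; apply: eq_bigr => j _.
by rewrite mxE.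
Qed.

Lemma frob_tr p q (A : 'M[R]_(p, q)) : frob A^T = frob A.
Proof. by rewrite !frobE fr2_tr. Qed.

Lemma fr2_mul p q r (A : 'M[R]_(p, q)) (B : 'M[R]_(q, r)) :
  fr2 (A *m B) <= fr2 A * fr2 B.
Proof.
rewrite /fr2 mulr_suml; apply: ler_sum => i _.
rewrite [X in _ <= _ * X]exchange_big mulr_sumr.
apply: ler_sum => j _; rewrite mxE; exact: CS.
Qed.

Lemma frob_mul p q r (A : 'M[R]_(p, q)) (B : 'M[R]_(q, r)) :
  frob (A *m B) <= frob A * frob B.
Proof.
rewrite !frobE -sqrtrM ?fr2_ge0 // ler_sqrt; first exact: fr2_mul.
by apply: mulr_ge0; apply: fr2_ge0.
Qed.

Lemma fr2_spec p q r (M : 'M[R]_(p, q)) (N : 'M[R]_(q, r)) s :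
  is_spectral_norm M s -> fr2 (M *m N) <= s ^+ 2 * fr2 N.
Proof.
move=> [s0 [hs _]].
rewrite /fr2 exchange_big [X in _ <= _ * X]exchange_big mulr_sumr.
apply: ler_sum => j _.
have e1 : \sum_i ((M *m N) i j)^+2 = vnorm2 (M *m col j N).
  apply: eq_bigr => i _; rewrite !mxE; congr (_ ^+ 2); apply: eq_bigr => l _; rewrite mxE.
  done.
have e2 : \sum_i (N i j)^+2 = vnorm2 (col j N) by apply: eq_bigr => i _; rewrite mxE.
by rewrite e1 e2.
Qed.

End Norms.


Section Jlem.
Variable R : rcfType.
Variable N : nat.
Variable J : 'M[R]_N.
Hypothesis Jd : forall i j, i != j -> J i j = 0.
Hypothesis J2 : forall i, J i i ^+ 2 = 1.

Lemma JJ i : J i i * J i i = 1. Proof. by rewrite -expr2 J2. Qed.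
Lemma Jn0 i : J i i != 0.
Proof. by apply/eqP => h; have := J2 i; rewrite h expr0n /= => /eqP; rewrite eq_sym oner_eq0. Qed.

Lemma mulJr p (A : 'M[R]_(p, N)) i j : (A *m J) i j = A i j * J j j.
Proof.
rewrite mxE (bigD1 j) //= big1 ?addr0 // => l hl.
by rewrite Jd ?mulr0.
Qed.

Lemma mulJl p (A : 'M[R]_(N, p)) i j : (J *m A) i j = J i i * A i j.
Proof.
rewrite mxE (bigD1 i) //= big1 ?addr0 // => l hl.
by rewrite Jd ?mul0r // eq_sym.
Qed.

Lemma fr2_mulJ p (A : 'M[R]_(p, N)) : fr2 (A *m J) = fr2 A.
Proof.
apply: eq_bigr => i _; apply: eq_bigr => j _.
by rewrite mulJr exprMn J2 mulr1.
Qed.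

Lemma fr2_Jmul p (A : 'M[R]_(N, p)) : fr2 (J *m A) = fr2 A.
Proof.
apply: eq_bigr => i _; apply: eq_bigr => j _.
by rewrite mulJl exprMn J2 mul1r.
Qed.

Lemma J_trig : is_trig_mx J.
Proof. by apply/is_trig_mxP => i j hij; rewrite Jd // neq_ltn hij. Qed.

Lemma JT : J^T = J.
Proof.
apply/matrixP => i j; rewrite mxE.
case: (eqVneq i j) => [->|h] //; by rewrite !Jd // eq_sym.
Qed.

Lemma qform (A B : 'M[R]_N) a b :
  (A *m J *m B^T) a b = \sum_l A a l * J l l * B b l.
Proof. by rewrite mxE; apply: eq_bigr => l _; rewrite mulJr mxE. Qed.

Lemma fp (X : 'M[R]_N) : is_trig_mx X ->
  2 * fr2 X <= fr2 (X *m J + J *m X^T).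
Proof.
move=> /is_trig_mxP Xt.
set S := X *m J + J *m X^T.
have SE : forall a b, S a b = X a b * J b b + J a a * X b a.
  by move=> a b; rewrite /S mxE mulJr mulJl mxE.
have pw : forall a b, 2 * (X a b ^+2 + X b a ^+2) <= S a b ^+2 + S b a ^+2.
  move=> a b; rewrite !SE.
  case: (ltngtP a b) => h.
  - rewrite (Xt a b h).
    have -> : (0 * J b b + J a a * X b a) ^+ 2 + (X b a * J a a + J b b * 0) ^+ 2
       = 2 * X b a ^+ 2 * J a a ^+ 2 by ring.
    rewrite J2; lra.
  - rewrite (Xt b a h).
    have -> : (X a b * J b b + J a a * 0) ^+ 2 + (0 * J a a + J b b * X a b) ^+ 2
       = 2 * X a b ^+ 2 * J b b ^+ 2 by ring.
    rewrite J2; lra.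
  - have ab : a = b by apply: val_inj.
    subst b. have := J2 a. move=> h2.
    have -> : (X a a * J a a + J a a * X a a) ^+ 2 = 4 * X a a ^+2 * J a a ^+2 by ring.
    rewrite h2. have := sqr_ge0 (X a a). lra.
have : \sum_a \sum_b (2 * (X a b ^+2 + X b a ^+2)) <= \sum_a \sum_b (S a b ^+2 + S b a ^+2).
  by apply: ler_sum => a _; apply: ler_sum => b _; apply: pw.
have e1 : forall (M : 'M[R]_N), \sum_a \sum_b (M a b ^+2 + M b a ^+2) = fr2 M + fr2 M^T.
  move=> M; rewrite /fr2 -big_split /=; apply: eq_bigr => a _.
  rewrite -big_split /=; apply: eq_bigr => b _; by rewrite mxE.
have e2 : \sum_a \sum_b (2 * (X a b ^+2 + X b a ^+2)) = 2 * (fr2 X + fr2 X^T).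
  rewrite -e1 mulr_sumr; apply: eq_bigr => a _; by rewrite mulr_sumr.
rewrite e2 e1 !fr2_tr. lra.
Qed.

End Jlem.


Section Core.
Variable R : rcfType.
Variable N : nat.
Variables (J E : 'M[R]_N).
Hypothesis Jd : forall i j, i != j -> J i j = 0.
Hypothesis J2 : forall i, J i i ^+ 2 = 1.
Hypothesis Esym : forall i j, E i j = E j i.
Hypothesis Esmall : frob E < 1/2.

Definition Ek k : 'M[R]_N := \matrix_(i, j) (if (i < k)%N && (j < k)%N then E i j else 0).

Lemma frob_Ek k : frob (Ek k) <= frob E.
Proof.
rewrite !frobE ler_sqrt ?fr2_ge0 //; apply: ler_sum => i _; apply: ler_sum => j _.
by rewrite mxE; case: ifP => _ //; rewrite expr0n /= sqr_ge0.
Qed.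

Lemma EkN : Ek N = E.
Proof. by apply/matrixP => i j; rewrite mxE !ltn_ord. Qed.

Lemma Ek0 : Ek 0 = 0.
Proof. by apply/matrixP => i j; rewrite !mxE. Qed.

Definition inv_at k (Y : 'M[R]_N) : Prop :=
  [/\ is_trig_mx Y, (forall i : 'I_N, 0 < Y i i), (forall i l : 'I_N, (k <= i)%N -> Y i l = (i == l)%:R),
      Y *m J *m Y^T = J + Ek k & s2 R * frob (Y - 1) <= 1 - Num.sqrt (1 - 2 * frob (Ek k))].

Lemma frob0 p q : frob (0 : 'M[R]_(p, q)) = 0.
Proof.
rewrite frobE (_ : fr2 _ = 0) ?sqrtr0 //.
by rewrite /fr2 big1 // => i _; rewrite big1 // => j _; rewrite mxE expr0n.
Qed.

Lemma inv0 : inv_at 0 1.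
Proof.
split.
- exact: scalar_mx_is_trig.
- by move=> i; rewrite mxE eqxx ltr01.
- by move=> i l _; rewrite mxE.
- by rewrite mul1mx trmx1 mulmx1 Ek0 addr0.
- by rewrite subrr frob0 Ek0 frob0 !mulr0 subr0 sqrtr1 subrr.
Qed.


Lemma sum_delta (F : 'I_N -> R) (kk : 'I_N) : \sum_i ((i == kk)%:R * F i) = F kk.
Proof.
rewrite (bigD1 kk) //= eqxx mul1r big1 ?addr0 // => i /negbTE ->.
by rewrite mul0r.
Qed.

Lemma ltS_ord (i kk : 'I_N) : (i < kk.+1)%N = (i < kk)%N || (i == kk).
Proof. by rewrite ltnS leq_eqVlt orbC. Qed.

Lemma fr2_col (v : 'cV[R]_N) : fr2 v = \sum_i v i 0 ^+ 2.
Proof. by apply: eq_bigr => i _; rewrite big_ord1. Qed.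

Lemma sum2_split (F G : 'I_N -> 'I_N -> R) :
  \sum_i \sum_j (F i j + G i j) = \sum_i \sum_j F i j + \sum_i \sum_j G i j.
Proof. by rewrite -big_split; apply: eq_bigr => i _; rewrite big_split. Qed.

Lemma ne_lt (i kk : 'I_N) : (i < kk)%N -> i != kk.
Proof. by move=> h; rewrite -val_eqE /= neq_ltn h. Qed.
Lemma ne_gt (i kk : 'I_N) : (kk < i)%N -> i != kk.
Proof. by move=> h; rewrite -val_eqE /= neq_ltn h orbT. Qed.

Lemma fr2_Ek_step (kk : 'I_N) :
  fr2 (Ek kk.+1) = fr2 (Ek kk) + 2 * fr2 (\col_i (if (i < kk)%N then E i kk else 0) : 'cV_N)
     + E kk kk ^+ 2.
Proof.
set vv := fun j : 'I_N => if (j < kk)%N then E j kk else 0.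
have pw : forall i j, Ek kk.+1 i j ^+2 = Ek kk i j ^+2 + (i == kk)%:R * vv j ^+2
   + (j == kk)%:R * vv i ^+2 + (i == kk)%:R * ((j == kk)%:R * E kk kk ^+2).
{ move=> i j; rewrite !mxE /vv !ltS_ord.
  case: (ssrnat.ltngtP i kk) => [hi|hi|/val_inj hi];
    [ rewrite (negbTE (ne_lt hi)) | rewrite (negbTE (ne_gt hi)) | subst i; rewrite eqxx ].
  all: case: (ssrnat.ltngtP j kk) => [hj|hj|/val_inj hj].
  all: first [ rewrite (negbTE (ne_lt hj)) | rewrite (negbTE (ne_gt hj)) | (subst j; rewrite ?eqxx) ].
  all: rewrite /= ?ltnn /= ?mul0r ?mul1r ?addr0 ?add0r ?expr0n /= ?mulr0 ?addr0 ?add0r //.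
  by rewrite Esym. }
rewrite /fr2 (eq_bigr (fun i => \sum_j (Ek kk i j ^+2 + (i == kk)%:R * vv j ^+2
   + (j == kk)%:R * vv i ^+2 + (i == kk)%:R * ((j == kk)%:R * E kk kk ^+2)))); last first.
  by move=> i _; apply: eq_bigr => j _; rewrite pw.
rewrite !sum2_split.
have h1 : \sum_i \sum_j ((i == kk)%:R * ((j == kk)%:R * E kk kk ^+2)) = E kk kk ^+ 2.
  under eq_bigr do rewrite -mulr_sumr sum_delta.
  by rewrite sum_delta.
have h2 : \sum_i \sum_j ((i == kk)%:R * vv j ^+2) = \sum_j vv j ^+2.
  under eq_bigr do rewrite -mulr_sumr.
  by rewrite sum_delta.
have h3 : \sum_i \sum_j ((j == kk)%:R * vv i ^+2) = \sum_j vv j ^+2.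
  apply: eq_bigr => i _.
  exact: (sum_delta (fun _ => vv i ^+ 2) kk).
rewrite h1 h2 h3.
have -> : \sum_i \sum_j (\col_i0 (if (i0 < kk)%N then E i0 kk else 0) : 'cV_N) i j ^+ 2
   = \sum_j vv j ^+2 by apply: eq_bigr => i _; rewrite big_ord1 mxE.
ring.
Qed.



Lemma normJ i : `|J i i| = 1.
Proof.
have h : `|J i i| ^+ 2 = 1 by rewrite -normrX J2 normr1.
apply: (@pexpIrn _ 2) => //; rewrite ?nnegrE ?normr_ge0 ?expr1n //.
Qed.

Lemma step (kk : 'I_N) (Y : 'M[R]_N) : inv_at kk Y -> exists Y', inv_at kk.+1 Y'.
Proof.
case=> Yt Ypos Yid Yeq Ybd.
have Yunit : Y *m J \in unitmx.
  rewrite unitmx_mul !unitmxE !det_trig ?(J_trig Jd) // !unitfE.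
  apply/andP; split; first by rewrite gt_eqF // prodr_gt0.
  by apply/prodf_neq0 => i _; apply: (Jn0 J2).
set v : 'cV[R]_N := \col_i (if (i < kk)%N then E i kk else 0).
set z : 'cV[R]_N := invmx (Y *m J) *m v.
have hz : Y *m J *m z = v by rewrite /z mulKVmx.
have z0 : forall l : 'I_N, (kk <= l)%N -> z l 0 = 0.
  move=> l hl.
  have h1 : (Y *m J *m z) l 0 = J l l * z l 0.
    rewrite mxE (bigD1 l) //= big1 ?addr0.
      by rewrite (mulJr Jd) Yid // eqxx mul1r.
    move=> m hm; rewrite (mulJr Jd) Yid // eq_sym (negbTE hm) mul0r mul0r //.
  have := h1; rewrite hz mxE ltnNge hl /= => /esym/eqP.
  by rewrite mulf_eq0 (negbTE (Jn0 J2 l)) /= => /eqP.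
clearbody z.
set X : 'M[R]_N := Y - 1 in Ybd *.
have YX : Y = 1 + X by rewrite /X addrC subrK.
have Xrow : forall l, X kk l = 0.
  by move=> l; rewrite /X !mxE Yid // subrr.
have Xt : is_trig_mx X.
  apply/is_trig_mxP => i j hij; rewrite /X !mxE.
  by move/is_trig_mxP: (Yt) => ->; rewrite // (negbTE (ne_lt hij)) subrr.
have XE : forall i l, X i l = Y i l - (i == l)%:R by move=> i l; rewrite /X !mxE.
clearbody X.
set x := frob X.
set p := frob v.
set q := `|E kk kk|.
set w := frob z.
set e := frob (Ek kk).
set e' := frob (Ek kk.+1).
have x0 : 0 <= x := frob_ge0 X.
have p0 : 0 <= p := frob_ge0 v.
have q0 : 0 <= q := normr_ge0 _.
have w0 : 0 <= w := frob_ge0 z.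
have e0 : 0 <= e := frob_ge0 _.
have e'0 : 0 <= e' := frob_ge0 _.
have e'1 : e' < 1/2 by apply: le_lt_trans (frob_Ek _) Esmall.
have hw : w <= p + x * w.
  have hJz : J *m z = v - X *m (J *m z).
    by rewrite -hz YX !mulmxDl mul1mx -mulmxA addrK.
  have fJz : frob (J *m z) = w by rewrite /w !frobE (fr2_Jmul Jd J2).
  rewrite -fJz {1}hJz.
  apply: le_trans (frob_sub _ _) _.
  rewrite lerD2l; exact: frob_mul.
have he : e^+2 + 2 * p^+2 + q^+2 <= e'^+2.
  by rewrite /e /e' /p !frob_sq fr2_Ek_step /q real_normK ?num_real.
have [ht hdl] := stepreal x0 e0 e'0 e'1 Ybd he p0 q0 w0 hw.
set sig := \sum_l z l 0 ^+2 * J l l.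
have w2 : w ^+ 2 = \sum_l z l 0 ^+ 2 by rewrite /w frob_sq fr2_col.
have hsig : `|sig| <= w ^+2.
  rewrite w2; apply: le_trans (ler_norm_sum _ _ _) _.
  by apply: ler_sum => l _; rewrite normrM normJ mulr1 normrX real_normK ?num_real.
set c := J kk kk * (E kk kk - sig).
have hc : `|c| <= q + w^+2.
  rewrite /c normrM normJ mul1r; apply: le_trans (ler_normB _ _) _.
  by rewrite lerD2l.
have c1 : 0 < 1 + c.
  have : - `|c| <= c by rewrite lerNl -normrN ler_norm.
  lra.
set d := Num.sqrt (1 + c).
have d0 : 0 < d by rewrite sqrtr_gt0.
have dd : d ^+ 2 = 1 + c by rewrite sqr_sqrtr // ltW.
have hd1 : (d - 1) ^+ 2 <= (q + w^+2) ^+ 2.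
  have hc2 : c ^+ 2 <= (q + w^+2)^+2.
    rewrite -real_normK ?num_real //.
    by apply: lerXn2r; rewrite ?nnegrE ?normr_ge0 //; apply: le_trans hc; exact: normr_ge0.
  have : (d - 1)^+2 <= c^+2.
    have -> : c = (d - 1) * (d + 1) by rewrite -[c](addKr 1) -dd; ring.
    rewrite exprMn -subr_ge0.
    have -> : (d - 1) ^+ 2 * (d + 1) ^+ 2 - (d - 1) ^+ 2 = (d - 1)^+2 * ((d+1)^+2 - 1) by ring.
    apply: mulr_ge0; first exact: sqr_ge0.
    nra.
  lra.

set Y' : 'M[R]_N := \matrix_(i, l) (if i == kk then (if l == kk then d else z l 0) else Y i l).
have Y'E : forall i l, Y' i l = if i == kk then (if l == kk then d else z l 0) else Y i l.
  by move=> i l; rewrite mxE.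
clearbody Y'.
have Ya_kk : forall a, a != kk -> Y a kk = 0.
  move=> a ha; case: (ltnP a kk) => h.
    by move/is_trig_mxP: (Yt) => ->.
  by rewrite Yid // (negbTE ha).
have zkk : z kk 0 = 0 by apply: z0.
have EkS : forall a b, a != kk -> b != kk -> Ek kk.+1 a b = Ek kk a b.
  by move=> a b ha hb; rewrite !mxE !ltS_ord (negbTE ha) (negbTE hb) !orbF.
have aux : forall a b, a != kk -> (Y' *m J *m Y'^T) a b = (J + Ek kk.+1) a b.
  move=> a b ha.
  rewrite (qform Jd).
  case: (eqVneq b kk) => [->|hb].
  - transitivity (\sum_l Y a l * J l l * z l 0).
      apply: eq_bigr => l _; rewrite !Y'E (negbTE ha) eqxx.
      case: (eqVneq l kk) => [->|hl] //.
      by rewrite Ya_kk // !mul0r.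
    transitivity ((Y *m J *m z) a 0).
      by rewrite mxE; apply: eq_bigr => l _; rewrite (mulJr Jd).
    rewrite hz !mxE (Jd ha) add0r ltS_ord (negbTE ha) orbF ltS_ord eqxx orbT andbT.
    done.
  - transitivity ((Y *m J *m Y^T) a b).
      rewrite (qform Jd); apply: eq_bigr => l _; by rewrite !Y'E (negbTE ha) (negbTE hb).
    by rewrite Yeq !mxE !ltS_ord (negbTE ha) (negbTE hb) !orbF.
have Geq : Y' *m J *m Y'^T = J + Ek kk.+1.
  apply/matrixP => a b.
  case: (eqVneq a kk) => [ea|ha]; last exact: aux.
  case: (eqVneq b kk) => [eb|hb].
  - subst a b.
    rewrite (qform Jd) (bigD1 kk) //= !Y'E eqxx !mxE ltS_ord eqxx orbT /=.
    rewrite (eq_bigr (fun l => z l 0 ^+ 2 * J l l)); last first.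
      by move=> l /negbTE hl; rewrite !Y'E eqxx hl; ring.
    have hs : sig = \sum_(l | l != kk) z l 0 ^+ 2 * J l l.
      by rewrite /sig (bigD1 kk) //= zkk expr0n /= mul0r add0r.
    rewrite -hs.
    have : d * J kk kk * d = (1 + c) * J kk kk by rewrite -dd; ring.
    move=> ->; rewrite /c.
    have := JJ J2 kk; move=> jj.
    have -> : (1 + J kk kk * (E kk kk - sig)) * J kk kk + sig
       = J kk kk + (J kk kk * J kk kk) * (E kk kk - sig) + sig by ring.
    rewrite jj; ring.
  - subst a.
    have sym : (Y' *m J *m Y'^T)^T = Y' *m J *m Y'^T.
      by rewrite !trmx_mul trmxK (JT Jd) mulmxA.
    transitivity ((Y' *m J *m Y'^T) b kk).
      by rewrite -{1}sym mxE.
    rewrite aux // !mxE andbC (Esym b kk).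
    congr (_ + _).
    by rewrite -{1}(JT Jd) mxE.

set X' : 'M[R]_N := Y' - 1.
have Y'X' : Y' = 1 + X' by rewrite /X' addrC subrK.
have X'E : forall i l, X' i l = X i l + (i == kk)%:R * (if l == kk then d - 1 else z l 0).
  move=> i l; rewrite /X' !mxE XE ?Y'E.
  case: (eqVneq i kk) => [->|hi].
    rewrite Yid //.
    case: (eqVneq l kk) => [el|hl].
      by subst l => /=; ring.
    by rewrite /=; ring.
  by rewrite /= mul0r addr0.
have Y't : is_trig_mx Y'.
  apply/is_trig_mxP => i l hil; rewrite Y'E.
  case: (eqVneq i kk) => [ei|hi].
    subst i; rewrite (negbTE (ne_gt hil)); apply: z0; exact: ltnW.
  by move/is_trig_mxP: (Yt) => ->.
have X't : is_trig_mx X'.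
  apply/is_trig_mxP => i l hil; rewrite /X' !mxE.
  by move/is_trig_mxP: (Y't) => ->; rewrite // (negbTE (ne_lt hil)) subrr.
clearbody X'.
set x' := frob X'.
have x'0 : 0 <= x' := frob_ge0 X'.
have fX' : fr2 X' = fr2 X + w^+2 + (d - 1)^+2.
  have pw : forall i l, X' i l ^+ 2 = X i l ^+2 + (i == kk)%:R * (if l == kk then (d - 1)^+2 else z l 0 ^+2).
    move=> i l; rewrite X'E; case: (eqVneq i kk) => [->|hi].
      by rewrite Xrow /=; case: (l == kk); ring.
    by rewrite /=; ring.
  rewrite /fr2 (eq_bigr (fun i => \sum_l (X i l ^+2 + (i == kk)%:R * (if l == kk then (d - 1)^+2 else z l 0 ^+2)))); last first.
    by move=> i _; apply: eq_bigr => l _; rewrite pw.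
  rewrite sum2_split -addrA; congr (_ + _).
  under eq_bigr do rewrite -mulr_sumr.
  rewrite sum_delta w2 (bigD1 kk) //= eqxx [in RHS](bigD1 kk) //= zkk expr0n /= add0r addrC.
  congr (_ + _); apply: eq_bigr => l /negbTE ->. done.
have hx2 : x'^+2 <= 1/2.
  by rewrite /x' frob_sq fX' -!frob_sq -/x; apply: hdl.
set S := X' *m J + J *m X'^T.
set T := X' *m J *m X'^T.
have hS : S = Ek kk.+1 - T.
  have h1 : Y' *m J *m Y'^T = J + S + T.
    rewrite Y'X' linearD /= (@trmx1 R N : (1 : 'M[R]_N)^T = 1) mulmxDl mul1mx mulmxDr mulmx1 mulmxDl /S /T !addrA.
    done.
  have : J + (S + T) = J + Ek kk.+1 by rewrite addrA -h1 Geq.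
  move/addrI => hST.
  by rewrite -hST addrK.
have fS : 2 * fr2 X' <= fr2 S := fp Jd J2 X't.
have hT : frob T <= x'^+2.
  apply: le_trans (frob_mul _ _) _.
  by rewrite frob_tr /x' !frobE (fr2_mulJ Jd J2) expr2.
have hS2 : frob S <= e' + x'^+2.
  rewrite hS; apply: le_trans (frob_sub _ _) _; by rewrite lerD2l.
have hsx : s2 R * x' <= frob S.
  rewrite /x' /s2 !frobE -sqrtrM // ler_sqrt ?fr2_ge0 //.
have h2x : 2 * x'^+2 <= 1 by lra.
have fin' := fin x'0 e'0 (ltW e'1) h2x (le_trans hsx hS2).
exists Y'; split => //.
- move=> i; rewrite Y'E; case: (eqVneq i kk) => [_|_] //.
- move=> i l hi; rewrite Y'E.
  have hik : i != kk by apply: ne_gt.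
  by rewrite (negbTE hik) Yid // ltnW.
- have -> : Y' - 1 = X' by rewrite Y'X' addrC addKr.
  exact: fin'.
Qed.


Lemma all_k k : (k <= N)%N -> exists Y, inv_at k Y.
Proof.
elim: k => [|k IH] hk; first by exists 1; exact: inv0.
have [Y HY] := IH (ltnW hk).
exact: (@step (Ordinal hk) Y HY).
Qed.

Lemma core : exists Y : 'M[R]_N, [/\ is_trig_mx Y, (forall i, 0 < Y i i),
   Y *m J *m Y^T = J + E & s2 R * frob (Y - 1) <= 1 - Num.sqrt (1 - 2 * frob E)].
Proof.
have [Y [Yt Yp _ Ye Yb]] := all_k (leqnn N).
by exists Y; split => //; rewrite -EkN.
Qed.

End Core.


Section Fin.
Variable R : rcfType.

Lemma JmxE m n (i j : 'I_(m + n)) :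
  Jmx R m n i j = (i == j)%:R * (if (i < m)%N then 1 else -1).
Proof.
rewrite /Jmx.
case: (split_ordP i) => i' ->; case: (split_ordP j) => j' ->;
  rewrite ?block_mxEul ?block_mxEur ?block_mxEdl ?block_mxEdr !mxE
          ?eq_lshift ?eq_rshift ?eq_lrshift ?eq_rlshift /=.
- by rewrite mulr1.
- by rewrite mul0r.
- by rewrite mul0r.
- by rewrite mulrN1.
Qed.

Lemma Jmx_d m n (i j : 'I_(m + n)) : i != j -> Jmx R m n i j = 0.
Proof. by move=> /negbTE h; rewrite JmxE h mul0r. Qed.

Lemma Jmx_2 m n (i : 'I_(m + n)) : Jmx R m n i i ^+ 2 = 1.
Proof. by rewrite JmxE eqxx mul1r; case: ifP => _; rewrite ?expr1n ?sqrrN ?expr1n. Qed.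

Lemma trig_mul p (A B : 'M[R]_p) : is_trig_mx A -> is_trig_mx B -> is_trig_mx (A *m B).
Proof.
move=> /is_trig_mxP hA /is_trig_mxP hB; apply/is_trig_mxP => i j hij.
rewrite mxE big1 // => l _.
case: (ltnP i l) => h; first by rewrite hA ?mul0r.
by rewrite hB ?mulr0 // (leq_ltn_trans h hij).
Qed.

Lemma trig_unit p (A : 'M[R]_p) : is_trig_mx A -> (forall i, 0 < A i i) -> A \in unitmx.
Proof.
move=> At Ap; rewrite unitmxE det_trig // unitfE gt_eqF //.
exact: prodr_gt0.
Qed.

End Fin.

Unset Implicit Arguments.
Theorem mainTheorem2 (R : rcfType) (m n : nat)
  (A : 'M[R]_m) (B : 'M[R]_(n, m)) (C : 'M[R]_n)
  (L dK : 'M[R]_(m + n)) (s : R) :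
  posdef A -> \rank B = n -> psd C ->
  gen_chol (block_mx A B^T B (- C)) L ->
  sym_mx dK ->
  is_spectral_norm (invmx L) s ->
  s ^+ 2 * frob dK < 1 / 2 ->
  exists dL : 'M[R]_(m + n),
    gen_chol (block_mx A B^T B (- C) + dK) (L + dL) /\
    frob (invmx L *m dL) <=
      1 / Num.sqrt 2 * (1 - Num.sqrt (1 - 2 * s ^+ 2 * frob dK)).
Proof.
move=> _ _ _ [L11 [L21 [L22 [hL [t11 [t22 [u11 [u22 hK]]]]]]]] hdK hs hsm.
set K := block_mx A B^T B (- C) in hK *.
set J := Jmx R m n in hK *.
have Lunit : L \in unitmx.
  by rewrite hL unitmxE det_lblock unitfE mulf_neq0 // -unitfE -unitmxE.
set Li := invmx L in hs *.
set E := Li *m dK *m Li^T.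
have ET : E^T = E by rewrite /E !trmx_mul trmxK hdK mulmxA.
have Esym : forall i j, E i j = E j i.
  by move=> i j; rewrite -{1}ET mxE.
have s0 : 0 <= s by case: hs.
have fdK0 : 0 <= frob dK := frob_ge0 dK.
have fE : frob E <= s ^+ 2 * frob dK.
  have h1 : fr2 E <= s ^+ 2 * fr2 (dK *m Li^T).
    by rewrite /E -mulmxA; apply: fr2_spec.
  have h2 : fr2 (dK *m Li^T) <= s ^+ 2 * fr2 dK.
    rewrite -fr2_tr trmx_mul trmxK hdK; apply: fr2_spec hs.
  have h3 : fr2 E <= (s ^+ 2 * frob dK) ^+ 2.
    rewrite exprMn frob_sq.
    apply: le_trans h1 _.
    have -> : (s ^+ 2) ^+ 2 * fr2 dK = s ^+ 2 * (s ^+ 2 * fr2 dK) by ring.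
    apply: ler_wpM2l; [exact: sqr_ge0 | exact: h2].
  have h4 : 0 <= s ^+ 2 * frob dK by apply: mulr_ge0 (sqr_ge0 _) fdK0.
  by rewrite frobE -(ger0_norm h4) -sqrtr_sqr ler_sqrt //; exact: sqr_ge0.
have Esmall : frob E < 1/2 by apply: le_lt_trans fE hsm.
have [Y [Yt Yp Ye Yb]] := core (@Jmx_d R m n) (@Jmx_2 R m n) Esym Esmall.
have LE : L *m E *m L^T = dK.
  rewrite /E !mulmxA mulmxV // mul1mx -mulmxA -trmx_mul mulmxV //.
  by rewrite (@trmx1 R (m + n)) mulmx1.
exists (L *m Y - L).
have LdL : L + (L *m Y - L) = L *m Y by rewrite addrC subrK.
rewrite LdL; split.
- have Yblk : Y = block_mx (ulsubmx Y) 0 (dlsubmx Y) (drsubmx Y).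
    by rewrite -{1}(submxK Y) (ursubmx_trig (leqnn m) Yt).
  have LY : L *m Y = block_mx (L11 *m ulsubmx Y) 0 (L21 *m ulsubmx Y + L22 *m dlsubmx Y)
                       (L22 *m drsubmx Y).
    by rewrite hL [in LHS]Yblk mulmx_block !mulmx0 !mul0mx !addr0 add0r.
  have Y11t : is_trig_mx (ulsubmx Y) by apply: ulsubmx_trig.
  have Y22t : is_trig_mx (drsubmx Y) by apply: (drsubmx_trig (leqnn m)).
  exists (L11 *m ulsubmx Y), (L21 *m ulsubmx Y + L22 *m dlsubmx Y), (L22 *m drsubmx Y).
  split => //; split.
    by apply/is_trig_mxP; apply: trig_mul => //; apply/is_trig_mxP.
  split.
    by apply/is_trig_mxP; apply: trig_mul => //; apply/is_trig_mxP.
  split.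
    rewrite unitmx_mul u11 /=; apply: trig_unit => // i; rewrite !mxE; exact: Yp.
  split.
    rewrite unitmx_mul u22 /=; apply: trig_unit => // i; rewrite !mxE; exact: Yp.
  rewrite trmx_mul.
  have -> : L *m Y *m J *m (Y^T *m L^T) = L *m (Y *m J *m Y^T) *m L^T by rewrite !mulmxA.
  by rewrite Ye mulmxDr mulmxDl -hK LE.
- have -> : Li *m (L *m Y - L) = Y - 1.
    by rewrite mulmxBr mulmxA mulVmx // mul1mx.
  have hsq : Num.sqrt (1 - 2 * s ^+ 2 * frob dK) <= Num.sqrt (1 - 2 * frob E).
    rewrite ler_sqrt; last by have := frob_ge0 E; lra.
    lra.
  have s20 : 0 < Num.sqrt (2 : R) by rewrite sqrtr_gt0.
  rewrite mul1r mulrC ler_pdivlMr // mulrC.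
  apply: le_trans Yb _; lra.
Qed.
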